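(* Let $U\subset \mathbb R^n$ and $V\subset \mathbb R^m$ be open and let $f:U\times V\to \mathbb R$ be upper-semicontinuous and bounded. Suppose $f$ is $\kappa$-semiconcave for some $\kappa>0$, i.e. $(x,y)\mapsto f(x,y)-\frac\kappa2(\|x\|^2+\|y\|^2)$ is concave. Then for every $0<\epsilon<\kappa^{-1}$ and every fixed $x\in U$, the function $y\mapsto f^{\epsilon,p}(x,y)-\frac{\kappa}{2} \|y\|^2$ is concave on $V$, where $f^{\epsilon,p}(x,y)= \sup_{z\in U} \{ f(z,y) - \frac{1}{2\epsilon} \| z-x\|^2\}$. *)

(* Defs.v *)
From HB Require Import structures.
From mathcomp Require Import all_boot all_order all_algebra.
From mathcomp Require Import boolp classical_sets reals.
Set Implicit Arguments. Unset Strict Implicit. Unset Printing Implicit Defensive.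
Import Order.TTheory GRing.Theory Num.Theory.
Local Open Scope ring_scope.
Local Open Scope classical_set_scope.

Section Defs.
Variable R : realType.

Definition sqnorm (n : nat) (x : 'rV[R]_n) : R := \sum_(i < n) (x ord0 i) ^+ 2.

Definition enorm (n : nat) (x : 'rV[R]_n) : R := Num.sqrt (sqnorm x).

Definition eopen (n : nat) (U : set 'rV[R]_n) : Prop :=
  forall x, U x -> exists2 r : R, 0 < r & forall z, enorm (z - x) < r -> U z.

Definition usc_on2 (n m : nat) (U : set 'rV[R]_n) (V : set 'rV[R]_m)
    (f : 'rV[R]_n -> 'rV[R]_m -> R) : Prop :=
  forall x y, U x -> V y -> forall e : R, 0 < e ->
    exists2 d : R, 0 < d & forall z w, U z -> V w ->
      sqnorm (z - x) + sqnorm (w - y) < d ^+ 2 -> f z w < f x y + e.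

Definition bounded_on2 (n m : nat) (U : set 'rV[R]_n) (V : set 'rV[R]_m)
    (f : 'rV[R]_n -> 'rV[R]_m -> R) : Prop :=
  exists M : R, forall z w, U z -> V w -> `|f z w| <= M.

(* concavity of a real function on a set D (standard convention: the domain is
   convex, i.e. closed under convex combinations, and the concavity inequality holds) *)
Definition concave_on (n : nat) (D : set 'rV[R]_n) (g : 'rV[R]_n -> R) : Prop :=
  forall a b, D a -> D b -> forall t : R, 0 <= t -> t <= 1 ->
    D (t *: a + (1 - t) *: b) /\
    t * g a + (1 - t) * g b <= g (t *: a + (1 - t) *: b).

Definition concave_on2 (n m : nat) (U : set 'rV[R]_n) (V : set 'rV[R]_m)
    (g : 'rV[R]_n -> 'rV[R]_m -> R) : Prop :=
  forall a1 a2 b1 b2, U a1 -> V a2 -> U b1 -> V b2 ->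
    forall t : R, 0 <= t -> t <= 1 ->
    U (t *: a1 + (1 - t) *: b1) /\ V (t *: a2 + (1 - t) *: b2) /\
    t * g a1 a2 + (1 - t) * g b1 b2
      <= g (t *: a1 + (1 - t) *: b1) (t *: a2 + (1 - t) *: b2).

Definition sup_conv (n m : nat) (U : set 'rV[R]_n) (f : 'rV[R]_n -> 'rV[R]_m -> R)
    (eps : R) (x : 'rV[R]_n) (y : 'rV[R]_m) : R :=
  sup [set f z y - (2 * eps)^-1 * sqnorm (z - x) | z in U].

End Defs.

(* Main.v *)
Require Import Defs.
From HB Require Import structures.
From mathcomp Require Import all_boot all_order all_algebra.
From mathcomp Require Import boolp classical_sets reals.
From mathcomp Require Import ring lra.
Import Order.TTheory GRing.Theory Num.Theory.
Local Open Scope ring_scope.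
Local Open Scope classical_set_scope.

Lemma sqnorm_ge0 {R : realType} {n} (u : 'rV[R]_n) : 0 <= sqnorm u.
Proof. by apply: sumr_ge0 => i _; rewrite sqr_ge0. Qed.

Lemma sqnorm_conv {R : realType} {n} (u v x : 'rV[R]_n) (t : R) :
  t * sqnorm (u - x) + (1 - t) * sqnorm (v - x) - sqnorm (t *: u + (1 - t) *: v - x)
  = t * (1 - t) * sqnorm (u - v).
Proof.
rewrite /sqnorm !mulr_sumr -big_split -sumrB; apply: eq_bigr => i _ /=; rewrite !mxE.
ring.
Qed.

Lemma fin_step (R : realFieldType) (t e Sa Sb Sc v1 v2 A B C : R) :
  t*(Sa-e) <= t*v1 -> (1-t)*(Sb-e) <= (1-t)*v2 ->
  t*(v1-A)+(1-t)*(v2-B) <= Sc - C -> t*(Sa-A)+(1-t)*(Sb-B) <= Sc - C + e.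
Proof. lra. Qed.

Theorem lemma4p3 (R : realType) (n m : nat) (U : set 'rV[R]_n) (V : set 'rV[R]_m)
    (f : 'rV[R]_n -> 'rV[R]_m -> R) (kappa : R) :
  eopen U -> eopen V ->
  usc_on2 U V f -> bounded_on2 U V f ->
  0 < kappa ->
  concave_on2 U V (fun x y => f x y - kappa / 2 * (sqnorm x + sqnorm y)) ->
  forall eps : R, 0 < eps -> eps < kappa^-1 ->
  forall x : 'rV[R]_n, U x ->
    concave_on V (fun y => sup_conv U f eps x y - kappa / 2 * sqnorm y).
Proof.
move=> _ _ _ [M HM] kp Hc eps ep epk x Ux a b Va Vb t t0 t1.
have [_ [Vc _]] := Hc x a x b Ux Va Ux Vb t t0 t1.
split=> //.
set c := t *: a + (1 - t) *: b.
set i := (2 * eps)^-1.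
set k := kappa / 2.
have i0 : 0 <= i by rewrite invr_ge0; lra.
have ki : k <= i.
  have h : kappa < eps^-1 by rewrite -(invrK kappa) ltf_pV2 ?posrE ?invr_gt0.
  rewrite /k /i invfM; lra.
pose val z y := f z y - i * sqnorm (z - x).
have hs : forall y, V y -> has_sup [set val z y | z in U].
  move=> y Vy; split; first by exists (val x y), x.
  exists M => _ [z Uz <-]; rewrite /val.
  have := HM z y Uz Vy; have := sqnorm_ge0 (z - x).
  move=> h1 h2; have := ler_norm (f z y); have : 0 <= i * sqnorm (z - x) by rewrite mulr_ge0.
  lra.
have main : forall z1 z2, U z1 -> U z2 ->
   t * (val z1 a - k * sqnorm a) + (1 - t) * (val z2 b - k * sqnorm b)
   <= sup [set val z c | z in U] - k * sqnorm c.
  move=> z1 z2 U1 U2.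
  have [Uz [_ H]] := Hc z1 a z2 b U1 Va U2 Vb t t0 t1.
  set z := t *: z1 + (1 - t) *: z2 in Uz H.
  have hz : val z c <= sup [set val z c | z in U].
    by apply: sup_upper_bound; [exact: hs|exists z].
  have E1 := sqnorm_conv z1 z2 0 t; rewrite !subr0 in E1.
  have E2 := sqnorm_conv z1 z2 x t.
  set P := t * (1 - t) * sqnorm (z1 - z2) in E1 E2.
  have P0 : 0 <= P by rewrite mulr_ge0 ?sqnorm_ge0 // mulr_ge0 // subr_ge0.
  have kP : k * P <= i * P by rewrite ler_wpM2r.
  have e1 := congr1 (fun w => k * w) E1; have e2 := congr1 (fun w => i * w) E2.
  move: hz H e1 e2 kP; rewrite /val /= -/z -/c -/k.

clearbody i k; lra.
suff : t * (sup [set val z a | z in U] - k * sqnorm a) +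
   (1 - t) * (sup [set val z b | z in U] - k * sqnorm b)
   <= sup [set val z c | z in U] - k * sqnorm c by [].
apply/ler_addgt0Pr => e e0.
have [_ [z1 U1 <-] h1] := sup_adherent e0 (hs a Va).
have [_ [z2 U2 <-] h2] := sup_adherent e0 (hs b Vb).
have := main z1 z2 U1 U2.
have s1 : t * (sup [set val z a | z in U] - e) <= t * val z1 a by rewrite ler_wpM2l // ltW.
have s2 : (1 - t) * (sup [set val z b | z in U] - e) <= (1 - t) * val z2 b
  by rewrite ler_wpM2l ?subr_ge0 // ltW.
move: s1 s2.
set Sa := sup _; set Sb := sup _; set Sc := sup _.
set v1 := val z1 a; set v2 := val z2 b.
exact: fin_step.
Qed.
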